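(* Let $V:\mathbb{R}^{d_1}\times\mathbb{R}^{d_2}\to\mathbb{R}^n$ be residual-homogeneous, $V(\theta_1,\theta_2)=\Phi\theta_1+g(\theta_2)$, where $\Phi\in\mathbb{R}^{n\times d_1}$ has full rank and $g$ is continuously differentiable and $h$-homogeneous, and suppose there are constants $C,\ell>0$ with $\Vert V(\theta)\Vert_\mu\le C\Vert\theta\Vert^\ell$ for all $\theta=(\theta_1,\theta_2)$. Let $\Pi_\Phi$ be the projection onto the column span of $\Phi$ and let $B_\Phi=\frac{\Vert (I-\gamma P)(V^*-\Pi_\Phi V^* )\Vert_\mu}{1-\gamma}$. Then for any initial condition $\theta(0)=\theta_0$, if $\theta(t)$ follows the dynamics $$\dot\theta=-\nabla V(\theta)^T A\,(V(\theta)-V^* ),$$ we have $\liminf_{t\to\infty}\Vert V(\theta(t))-\Pi_\Phi V^*\Vert_\mu\le B_\Phi$.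
   Context: A Markov reward process has finite state space $\mathcal{S}$ with $|\mathcal{S}|=n$, transition matrix $P$ (entries $P(s'|s)$) defining an irreducible, aperiodic Markov chain with stationary distribution $\mu$, a finite reward function $r(s,s')$, and discount factor $\gamma\in[0,1)$. Let $R(s)=\mathbb{E}_{s'\sim P(\cdot|s)}[r(s,s')]$ and let $V^*\in\mathbb{R}^n$ be the unique solution of $V^*=R+\gamma PV^*$. Let $D_\mu=\mathrm{diag}(\mu)$ and $A:=D_\mu(I-\gamma P)$. For $x\in\mathbb{R}^n$, $\Vert x\Vert_\mu^2=x^TD_\mu x$; $\Vert\theta\Vert$ is the Euclidean norm. $\nabla V(\theta)$ is the Jacobian of $V$ with respect to $\theta=(\theta_1,\theta_2)\in\mathbb{R}^{d_1+d_2}$. A differentiable $f:\mathbb{R}^k\to\mathbb{R}^m$ is $h$-homogeneous (for $h\in\mathbb{R}$) if $f(x)=h\,\nabla f(x)\,x$ for all $x$. The projection $\Pi_\Phi$ is taken orthogonal with respect to the inner product $\langle x,y\rangle_\mu=x^TD_\mu y$. *)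

(* Defs.v *)
(* Vectors are ROW vectors 'rV[R]_k, following MathComp-Analysis's
   convention for derivatives: for f : 'rV_p -> 'rV_q, the library jacobian
   'J f x : 'M_(p, q) satisfies 'D_v f x = v *m 'J f x, i.e. 'J f x is the
   TRANSPOSE of the usual (q x p) Jacobian matrix nabla f(x). *)
From HB Require Import structures.
From mathcomp Require Import all_boot all_order all_algebra.
From mathcomp Require Import all_classical all_reals all_analysis.
Set Implicit Arguments. Unset Strict Implicit. Unset Printing Implicit Defensive.
Import Order.TTheory GRing.Theory Num.Theory.
Import numFieldNormedType.Exports.
Local Open Scope ring_scope.

Section Defs.
Variable R : realType.

Definition matvec (m k : nat) (M : 'M[R]_(m, k)) (x : 'rV[R]_k) : 'rV[R]_m :=
  (M *m x^T)^T.

(* P(s'|s) = P s s' : a (row-)stochastic matrix *)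
Definition stochastic (n : nat) (P : 'M[R]_n) : Prop :=
  (forall i j, 0 <= P i j) /\ (forall i, \sum_j P i j = 1).

Definition irreducible (n : nat) (P : 'M[R]_n) : Prop :=
  forall i j, exists k : nat, 0 < (P ^+ k) i j.

(* aperiodic: for every state i, gcd {k >= 1 | P^k(i,i) > 0} = 1, i.e.
   every common divisor of the return times equals 1 *)
Definition aperiodic (n : nat) (P : 'M[R]_n) : Prop :=
  forall i (d : nat),
    (forall k : nat, (0 < k)%N -> 0 < (P ^+ k) i i -> (d %| k)%N) -> d = 1%N.

Definition stationary_dist (n : nat) (P : 'M[R]_n) (mu : 'rV[R]_n) : Prop :=
  (forall i, 0 <= mu 0 i) /\ \sum_i mu 0 i = 1 /\ mu *m P = mu.

Definition exp_reward (n : nat) (P : 'M[R]_n) (r : 'I_n -> 'I_n -> R)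
  : 'rV[R]_n := \row_s \sum_s' P s s' * r s s'.

Definition Dmu (n : nat) (mu : 'rV[R]_n) : 'M[R]_n := diag_mx mu.

Definition Amat (n : nat) (mu : 'rV[R]_n) (gamma : R) (P : 'M[R]_n) : 'M[R]_n :=
  Dmu mu *m (1%:M - gamma *: P).

Definition muinner (n : nat) (mu : 'rV[R]_n) (x y : 'rV[R]_n) : R :=
  \sum_i mu 0 i * x 0 i * y 0 i.

Definition munorm (n : nat) (mu : 'rV[R]_n) (x : 'rV[R]_n) : R :=
  Num.sqrt (muinner mu x x).

Definition euclid_norm (k : nat) (x : 'rV[R]_k) : R :=
  Num.sqrt (\sum_i x 0 i ^+ 2).

Definition C1 (p q : nat) (f : 'rV[R]_p -> 'rV[R]_q) : Prop :=
  (forall x, differentiable f x) /\ continuous (fun x => 'J f x).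

Definition homogeneous (p q : nat) (h : R) (f : 'rV[R]_p -> 'rV[R]_q) : Prop :=
  (forall x, differentiable f x) /\ (forall x, f x = h *: (x *m 'J f x)).

(* residual-homogeneous parametrization V(theta1, theta2) = Phi theta1 + g theta2,
   theta = (theta1, theta2) stored as the row vector row_mx theta1 theta2 *)
Definition resV (n d1 d2 : nat) (Phi : 'M[R]_(n, d1))
  (g : 'rV[R]_d2 -> 'rV[R]_n) (theta : 'rV[R]_(d1 + d2)) : 'rV[R]_n :=
  matvec Phi (lsubmx theta) + g (rsubmx theta).

End Defs.

(* Main.v *)
Require Import Defs.
From HB Require Import structures.
From mathcomp Require Import all_boot all_order all_algebra.
From mathcomp Require Import all_classical all_reals all_analysis.
From mathcomp Require Import ring lra.
Import Order.TTheory GRing.Theory Num.Theory.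
Import numFieldNormedType.Exports.
Local Open Scope classical_set_scope.
Local Open Scope ring_scope.
Set Implicit Arguments. Unset Strict Implicit. Unset Printing Implicit Defensive.

Section Alg.
Variable R : realType.

Lemma prod_sums (I J : finType) (f : I -> R) (g : J -> R) :
  (\sum_i f i) * (\sum_j g j) = \sum_i \sum_j f i * g j.
Proof. by rewrite mulr_suml; apply: eq_bigr => i _; rewrite mulr_sumr. Qed.

Lemma CS_sum (n : nat) (w a b : 'I_n -> R) : (forall i, 0 <= w i) ->
  (\sum_i w i * a i * b i) ^+ 2 <=
  (\sum_i w i * a i ^+ 2) * (\sum_i w i * b i ^+ 2).
Proof.
move=> w0.
have E : (\sum_i w i * a i ^+ 2) * (\sum_i w i * b i ^+ 2) *+ 2
   - (\sum_i w i * a i * b i) ^+ 2 *+ 2 =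
   \sum_i \sum_j w i * w j * (a i * b j - a j * b i) ^+ 2.
  have X : \sum_i \sum_j (w i * a i ^+ 2) * (w j * b j ^+ 2) =
            \sum_j \sum_i (w i * a i ^+ 2) * (w j * b j ^+ 2).
    by rewrite exchange_big.
  rewrite mulr2n expr2 !prod_sums {2}X.
  rewrite -big_split /=.
  rewrite -sumrMnl -sumrB; apply: eq_bigr => i _.
  rewrite -sumrMnl -big_split -sumrB; apply: eq_bigr => j _ /=.
  ring.
have H : 0 <= (\sum_i w i * a i ^+ 2) * (\sum_i w i * b i ^+ 2) *+ 2
   - (\sum_i w i * a i * b i) ^+ 2 *+ 2.
  rewrite E; apply: sumr_ge0 => i _; apply: sumr_ge0 => j _.
  by apply: mulr_ge0; [apply: mulr_ge0|apply: sqr_ge0].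
by move: H; rewrite subr_ge0 lerMn2r.
Qed.

Lemma muinner_ge0 n (mu x : 'rV[R]_n) : (forall i, 0 <= mu 0 i) ->
  0 <= muinner mu x x.
Proof.
move=> m0; apply: sumr_ge0 => i _; rewrite -mulrA mulr_ge0 //.
by rewrite -expr2 sqr_ge0.
Qed.

Lemma munorm_ge0 n (mu x : 'rV[R]_n) : 0 <= munorm mu x.
Proof. exact: sqrtr_ge0. Qed.

Lemma munorm_sq n (mu x : 'rV[R]_n) : (forall i, 0 <= mu 0 i) ->
  munorm mu x ^+ 2 = muinner mu x x.
Proof. by move=> m0; rewrite /munorm sqr_sqrtr // muinner_ge0. Qed.

Lemma eqle (a b : R) : a = b -> a <= b. Proof. by move->. Qed.

Lemma sq_le (a d : R) : 0 <= d -> a ^+ 2 <= d ^+ 2 -> a <= d.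
Proof. move=> hd H; have [a0|a0] := lerP a 0; [lra|nra]. Qed.

Lemma muinner_CS n (mu x y : 'rV[R]_n) : (forall i, 0 <= mu 0 i) ->
  muinner mu x y <= munorm mu x * munorm mu y.
Proof.
move=> m0.
have H : muinner mu x y ^+ 2 <= (munorm mu x * munorm mu y) ^+ 2.
  rewrite exprMn !munorm_sq //.
  have := @CS_sum n (fun i => mu 0 i) (fun i => x 0 i) (fun i => y 0 i) m0.
  congr (_ <= _ * _); apply: eq_bigr => i _; by rewrite expr2 mulrA.
have := munorm_ge0 mu x; have := munorm_ge0 mu y.
move=> hc hb; apply: sq_le => //; exact: mulr_ge0.
Qed.

Lemma muinnerDr n (mu x y z : 'rV[R]_n) :
  muinner mu x (y + z) = muinner mu x y + muinner mu x z.
Proof. by rewrite /muinner -big_split; apply: eq_bigr => i _; rewrite mxE mulrDr. Qed.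

Lemma muinnerZr n (mu x y : 'rV[R]_n) c :
  muinner mu x (c *: y) = c * muinner mu x y.
Proof. by rewrite /muinner mulr_sumr; apply: eq_bigr => i _; rewrite mxE; ring. Qed.

Lemma muinnerNr n (mu x y : 'rV[R]_n) :
  muinner mu x (- y) = - muinner mu x y.
Proof. by rewrite -scaleN1r muinnerZr mulN1r. Qed.

Lemma munormN n (mu x : 'rV[R]_n) : munorm mu (- x) = munorm mu x.
Proof.
rewrite /munorm /muinner; congr Num.sqrt; apply: eq_bigr => i _.
by rewrite !mxE; ring.
Qed.

Lemma matvecE m k (M : 'M[R]_(m, k)) x : matvec M x = x *m M^T.
Proof. by rewrite /matvec trmx_mul trmxK. Qed.

Lemma matvec_entry m k (M : 'M[R]_(m, k)) x i :
  matvec M x 0 i = \sum_j M i j * x 0 j.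
Proof. by rewrite /matvec !mxE; apply: eq_bigr => j _; rewrite !mxE. Qed.

Lemma jensen n (P : 'M[R]_n) (mu x : 'rV[R]_n) :
  stochastic P -> stationary_dist P mu ->
  munorm mu (matvec P x) <= munorm mu x.
Proof.
move=> [P0 P1] [m0 [_ mP]].
rewrite /munorm ler_wsqrtr //.
apply: (@le_trans _ _ (\sum_i mu 0 i * \sum_j P i j * x 0 j ^+ 2)).
  apply: ler_sum => i _; rewrite -mulrA ler_wpM2l // -expr2 matvec_entry.
  have H := @CS_sum n (fun j => P i j) (fun j => 1) (fun j => x 0 j) (P0 i).
  have e1 : \sum_j P i j * x 0 j = \sum_j P i j * 1 * x 0 j.
    by apply: eq_bigr => j _; rewrite mulr1.
  rewrite e1; apply: (le_trans H); apply: eqle.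
  rewrite [X in X * _](_ : _ = 1) ?mul1r //.
  rewrite -[RHS](P1 i); apply: eq_bigr => j _; by rewrite expr1n mulr1.
under eq_bigr do rewrite mulr_sumr.
rewrite exchange_big /=; apply: ler_sum => j _.
have -> : mu 0 j = (mu *m P) 0 j by rewrite mP.
rewrite mxE !mulr_suml; apply: eqle; apply: eq_bigr => i _.
by rewrite expr2; ring.
Qed.


Lemma matvecD m k (M : 'M[R]_(m, k)) x y :
  matvec M (x + y) = matvec M x + matvec M y.
Proof. by rewrite !matvecE mulmxDl. Qed.

Lemma matvecIP n (P : 'M[R]_n) (g : R) x :
  matvec (1%:M - g *: P) x = x - g *: matvec P x.
Proof.
by rewrite !matvecE linearB /= trmx1 linearZ /= mulmxBr mulmx1 scalemxAr.
Qed.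

Lemma key n (P : 'M[R]_n) (mu : 'rV[R]_n) (g : R) (e u : 'rV[R]_n) :
  stochastic P -> stationary_dist P mu -> 0 <= g ->
  (1 - g) * munorm mu e ^+ 2 - munorm mu e * munorm mu (matvec (1%:M - g *: P) u)
  <= muinner mu e (matvec (1%:M - g *: P) (e + u)).
Proof.
move=> sP sd g0; have m0 := sd.1.
rewrite matvecD muinnerDr [X in muinner _ _ X + _]matvecIP muinnerDr muinnerNr.
rewrite muinnerZr -munorm_sq //.
have h1 := muinner_CS e (matvec P e) m0.
have h2 := jensen e sP sd.
have h3 := muinner_CS e (- matvec (1%:M - g *: P) u) m0.
rewrite muinnerNr munormN in h3.
have a0 := munorm_ge0 mu e.
have h4 : muinner mu e (matvec P e) <= munorm mu e ^+ 2.
  apply: (le_trans h1); rewrite expr2; exact: ler_wpM2l.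
have h5 : g * muinner mu e (matvec P e) <= g * munorm mu e ^+ 2 by exact: ler_wpM2l.
lra.
Qed.

Lemma muinner_mx n (mu e y : 'rV[R]_n) (M : 'M[R]_n) :
  (e *m (Dmu mu *m M) *m y^T) 0 0 = muinner mu e (matvec M y).
Proof.
rewrite /Dmu mulmxA -mulmxA mul_mx_diag /muinner mxE; apply: eq_bigr => i _.
rewrite [in LHS]mxE /matvec [in RHS]mxE; ring.
Qed.


Lemma derive_lin (V W : normedModType R) (f : V -> W)
  (lf : forall (a : R) x y, f (a *: x + y) = a *: f x + f y) (x v : V) :
  is_derive x v f (f v).
Proof.
have E : \forall h \near (0 : R)^', h^-1 *: (f (h *: v + x) - f x) = f v.
  near=> h; rewrite lf addrK scalerA mulVf ?scale1r //.
  near: h; exact: nbhs_dnbhs_neq.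
have C : (fun h : R => h^-1 *: (f (h *: v + x) - f x)) @ (0 : R)^' --> f v.
  exact: cvg_near_cst.
apply: DeriveDef; first by apply/cvg_ex; exists (f v).
exact: cvg_lim C.
Unshelve. all: by end_near. Qed.

Lemma lin_diff m k (B : 'M[R]_(m, k)) (x : 'rV[R]_m) :
  differentiable (fun y : 'rV[R]_m => y *m B) x.
Proof.
have -> : (fun y : 'rV[R]_m => y *m B) = \sum_i (fun y : 'rV[R]_m => y 0 i *: row i B).
  by apply/funext => y; rewrite fct_sumE mulmx_sum_row.
apply: differentiable_sum => i; apply: differentiableZl.
exact: differentiable_coord.
Qed.

Lemma resV_diff n d1 d2 (Phi : 'M[R]_(n, d1)) (g : 'rV[R]_d2 -> 'rV[R]_n) th :
  (forall x, differentiable g x) -> differentiable (resV Phi g) th.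
Proof.
move=> dg.
have -> : resV Phi g = (fun y : 'rV[R]_(d1 + d2) => lsubmx y *m Phi^T) + (g \o rsubmx).
  by apply/funext => y; rewrite /resV matvecE.
apply: differentiableD.
  apply: (@differentiable_comp _ _ _ _ lsubmx (fun y => y *m Phi^T)).
    exact: differentiable_lsubmx.
  exact: lin_diff.
apply: differentiable_comp; first exact: differentiable_rsubmx.
exact: dg.
Qed.

Lemma resV_J n d1 d2 (Phi : 'M[R]_(n, d1)) (g : 'rV[R]_d2 -> 'rV[R]_n) (th v : 'rV[R]_(d1 + d2)) :
  (forall x, differentiable g x) ->
  v *m 'J (resV Phi g) th = lsubmx v *m Phi^T + rsubmx v *m 'J g (rsubmx th).
Proof.
move=> dg.
rewrite -deriveEjacobian; last exact: resV_diff.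
have -> : resV Phi g = (fun y : 'rV[R]_(d1 + d2) => lsubmx y *m Phi^T) + (g \o rsubmx).
  by apply/funext => y; rewrite /resV matvecE.
have L : is_derive th v (fun y : 'rV[R]_(d1 + d2) => lsubmx y *m Phi^T) (lsubmx v *m Phi^T).
  apply: (derive_lin (f := fun y : 'rV[R]_(d1 + d2) => lsubmx y *m Phi^T)).
  by move=> a x y; rewrite linearD linearZ /= mulmxDl scalemxAl.
have G : 'D_v (g \o rsubmx) th = 'D_(rsubmx v) g (rsubmx th).
  have F : (fun h : R => h^-1 *: ((g \o rsubmx) (h *: v + th) - (g \o rsubmx) th)) =
     (fun h : R => h^-1 *: (g (h *: rsubmx v + rsubmx th) - g (rsubmx th))).
    apply/funext => h /=; have E : rsubmx (h *: v + th) = h *: rsubmx v + rsubmx th by apply/matrixP => i j; rewrite !mxE.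
    by rewrite E.
  by rewrite /derive F.
rewrite deriveD; last 2 first.
- by case: L.
- apply: diff_derivable; apply: differentiable_comp; first exact: differentiable_rsubmx.
  exact: dg.
rewrite (derive_val (is_derive := L)) G deriveEjacobian //.
Qed.


Lemma coord_derive m (F : R -> 'rV[R]_m) s k : derivable F s 1 ->
  is_derive s 1 (fun u => F u 0 k) (('D_1 F s) 0 k).
Proof.
move=> dF; have := (derivable_mxP F s 1).1 dF 0 k => dk.
apply: DeriveDef => //.
by rewrite derive_mx // mxE.
Qed.

Lemma wsumsq_derive m (F : R -> 'rV[R]_m) (c a : 'rV[R]_m) s :
  derivable F s 1 ->
  is_derive s 1 (fun u => \sum_k c 0 k * (F u 0 k - a 0 k) ^+ 2)
    (\sum_k 2 * c 0 k * (F s 0 k - a 0 k) * ('D_1 F s) 0 k).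
Proof.
move=> dF.
have T : forall k, is_derive s 1 (fun u => c 0 k * (F u 0 k - a 0 k) ^+ 2)
    (2 * c 0 k * (F s 0 k - a 0 k) * ('D_1 F s) 0 k).
  move=> k.
  have h1 : is_derive s 1 ((fun u => F u 0 k) - cst (a 0 k)) (('D_1 F s) 0 k - 0).
    apply: is_deriveB; exact: coord_derive.
  have h2 := is_deriveM h1 h1.
  have h3 := is_deriveZ (c 0 k) h2.
  have -> : (fun u => c 0 k * (F u 0 k - a 0 k) ^+ 2) =
     (c 0 k \*: (((fun u : R => F u 0 k) - cst (a 0 k)) *
        ((fun u : R => F u 0 k) - cst (a 0 k)))).
    by apply/funext => u /=; rewrite expr2.
  apply: is_derive_eq h3 _.
  rewrite /= subr0 /GRing.scale /=.
  have -> : ((fun u : R => F u 0 k) - cst (a 0 k)) s = F s 0 k - a 0 k by [].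
  by rewrite mulr2n; ring.
have S := is_derive_sum T.
have -> : (fun u => \sum_k c 0 k * (F u 0 k - a 0 k) ^+ 2) =
  \sum_k (fun u => c 0 k * (F u 0 k - a 0 k) ^+ 2).
  by apply/funext => u; rewrite fct_sumE.
exact: S.
Qed.


Lemma ray_derive d n (g : 'rV[R]_d -> 'rV[R]_n) (x : 'rV[R]_d) (s : R) :
  differentiable g (s *: x) ->
  derivable (fun u : R => g (u *: x)) s 1 /\
  'D_1 (fun u : R => g (u *: x)) s = x *m 'J g (s *: x).
Proof.
move=> dg.
have F : (fun h : R => h^-1 *: (g ((h *: 1 + s) *: x) - g (s *: x))) =
         (fun h : R => h^-1 *: (g (h *: x + s *: x) - g (s *: x))).
  by apply/funext => h; rewrite scalerDl [h *: 1]mulr1.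
split.
  by rewrite /derivable F; apply: diff_derivable.
by rewrite /derive F -deriveEjacobian.
Qed.

Lemma homog_neg_zero d n (h : R) (g : 'rV[R]_d -> 'rV[R]_n) :
  h < 0 -> homogeneous h g -> forall x, g x = 0.
Proof.
move=> hlt [dg hom] x.
pose phi := fun u : R => g (u *: x).
pose q := fun u : R => \sum_k (const_mx 1 : 'rV[R]_n) 0 k * (phi u 0 k - (0 : 'rV[R]_n) 0 k) ^+ 2.
have dq : forall u : R, is_derive u 1 q
    (\sum_k 2 * (const_mx 1 : 'rV[R]_n) 0 k * (phi u 0 k - (0 : 'rV[R]_n) 0 k) * ('D_1 phi u) 0 k).
  move=> u; apply: (@wsumsq_derive n phi); exact: (ray_derive (dg (u *: x))).1.
have dqle : forall u : R, 0 < u -> 'D_1 q u <= 0.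
  move=> u u0; rewrite (derive_val (is_derive := dq u)).
  rewrite (ray_derive (dg (u *: x))).2.
  have E : x *m 'J g (u *: x) = (h * u)^-1 *: phi u.
    rewrite /phi [in RHS]hom -scalemxAl !scalerA mulVf ?scale1r //.
    by rewrite mulf_neq0 //; [exact: ltr0_neq0 | exact: lt0r_neq0].
  rewrite E; apply: sumr_le0 => k _; rewrite !mxE subr0 mulr1.
  have : (h * u)^-1 < 0 by rewrite invr_lt0 nmulr_rlt0.
  move=> hu; have := sqr_ge0 (phi u 0 k); nra.
have cq : {within `[0, 1], continuous q}.
  by apply: derivable_within_continuous => u _; case: (dq u).
have dd : forall u, derivable q u 1 by move=> u; case: (dq u).
have dqle' : forall u, u \in `]0, 1[ -> derive1 q u <= 0.
  move=> u uin; rewrite derive1E; apply: dqle.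
  by move: uin; rewrite in_itv /= => /andP[].
have mon := @ler0_derive1_le_cc R q 0 1 (fun u _ => dd u) dqle' cq.
have q10 : q 1 <= q 0.
  by apply: mon; rewrite ?in_itv /= ?ler01 ?lexx.
have g0 : g 0 = 0 by rewrite hom mul0mx scaler0.
have q0 : q 0 = 0.
  rewrite /q /phi scale0r g0; apply: big1 => k _; rewrite !mxE subr0.
  by rewrite expr2 !mulr0.
have terms : forall k, 0 <= (const_mx 1 : 'rV[R]_n) 0 k * (phi 1 0 k - (0 : 'rV[R]_n) 0 k) ^+ 2.
  by move=> k; rewrite !mxE mul1r sqr_ge0.
have qz : q 1 = 0.
  have H : q 1 <= 0 by rewrite -q0.
  apply/eqP; rewrite eq_le H /=; exact: sumr_ge0.
apply/rowP => k; rewrite mxE.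
move: qz; rewrite /q => qz.
have := @psumr_eq0P _ _ _ _ (fun k _ => terms k) qz k isT.
rewrite /phi scale1r !mxE mul1r subr0 => /eqP; rewrite sqrf_eq0 => /eqP //.
Qed.


Lemma homog_fact d n (h : R) (g : 'rV[R]_d -> 'rV[R]_n) :
  homogeneous h g -> exists h', 0 <= h' /\ forall x, g x = h' *: (x *m 'J g x).
Proof.
move=> hom; have [hlt|hge] := ltrP h 0.
  exists 0; split => // x; rewrite scale0r; exact: homog_neg_zero hlt hom x.
by exists h; split => //; case: hom.
Qed.

Lemma liminf_le (f : R -> R) (B : R) :
  (forall M c, B < c -> (forall t, M < t -> c <= f t) -> False) ->
  (limf_einf (fun t => (f t)%:E) (@pinfty_nbhs R) <= B%:E)%E.
Proof.
move=> core; rewrite limf_einfE; apply: ge_ereal_sup => _ [V [M [Mr HM]] <-].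
rewrite leNgt; apply/negP => Hlt.
have lb : forall t, M < t -> (ereal_inf [set (f t)%:E | t in V] <= (f t)%:E)%E.
  by move=> t Mt; apply: ereal_inf_lbound; exists t => //; exact: HM.
move: Hlt lb; case: (ereal_inf _) => [r| |] Hlt lb.
- apply: (core M r); first by rewrite -lte_fin.
  by move=> t Mt; rewrite -lee_fin; exact: lb.
- have := lb (M + 1); rewrite ltrDl ltr01 => /(_ isT).
  by rewrite leye_eq.
- by move: Hlt; rewrite ltNge leNye.
Qed.


Lemma descent (E dE nrm : R -> R) (K gam : R) :
  (forall t, 0 <= E t) -> (forall t : R, 0 < t -> is_derive t 1 E (dE t)) ->
  (forall t : R, 0 < t -> dE t <= - (1 - gam) * nrm t ^+ 2 + nrm t * K) ->
  0 <= K -> gam < 1 ->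
  forall M c : R, K / (1 - gam) < c -> (forall t : R, M < t -> c <= nrm t) -> False.
Proof.
move=> E0 dEd dEle K0 g1 M c Bc Hc.
have g1' : 0 < 1 - gam by rewrite subr_gt0.
have Kc : K < (1 - gam) * c by rewrite mulrC -ltr_pdivrMr.
have c0 : 0 < c.
  apply: le_lt_trans Bc; exact: divr_ge0 K0 (ltW g1').
pose T := Num.max M 0 + 1.
have hM1 : M <= Num.max M 0 by rewrite le_max lexx.
have hM2 : 0 <= Num.max M 0 by rewrite le_max lexx orbT.
have T0 : 0 < T by rewrite /T; lra.
have TM : M < T by rewrite /T; lra.
pose del := c * ((1 - gam) * c - K).
have del0 : 0 < del by rewrite /del mulr_gt0 // subr_gt0.
have dEneg : forall t, T < t -> dE t <= - del.
  move=> t Tt; have t0 : 0 < t by exact: lt_trans Tt.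
  have := dEle t t0; have := Hc t (lt_trans TM Tt).
  rewrite /del; move: (nrm t) => x cx H.
  apply: le_trans H _.
  have : 0 <= (x - c) * ((1 - gam) * (x + c) - K).
    apply: mulr_ge0; first by rewrite subr_ge0.
    rewrite subr_ge0; apply: le_trans (ltW Kc) _.
    apply: ler_wpM2l; [exact: ltW | lra].
  nra.
pose b := T + E T / del + 1.
have Tb : T < b.
  have : 0 <= E T / del by rewrite divr_ge0 // ltW.
  rewrite /b; lra.
have inT : forall x, x \in `]T, b[ -> T < x.
  by move=> x; rewrite in_itv /= => /andP[].
have cont : {within `[T, b], continuous E}.
  apply: derivable_within_continuous => x; rewrite in_itv /= => /andP[Tx _].
  have : 0 < x by exact: lt_le_trans T0 Tx.
  by move=> /dEd; case.
have [xi xiin Eq] := MVT Tb (fun x xin => dEd x (lt_trans T0 (inT x xin))) cont.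
have := dEneg xi (inT xi xiin).
have : 0 < b - T by rewrite subr_gt0.
have := E0 b.
have Eb : b - T = E T / del + 1 by rewrite /b; ring.
rewrite Eb in Eq *.
move: (dE xi) Eq => D Eq h1 h2 h3.
have : D * (E T / del + 1) <= - del * (E T / del + 1).
  by rewrite ler_wpM2r // ltW.
have ED : del * (E T / del) = E T.
  by rewrite mulrC -mulrA mulVf ?gt_eqF // mulr1.
move: ED Eq h1; move: (E T / del) => s ED Eq h1 H.
nra.
Qed.


End Alg.

Unset Implicit Arguments.

Theorem theorem2 (R : realType) (n d1 d2 : nat)
  (P : 'M[R]_n) (mu : 'rV[R]_n) (r : 'I_n -> 'I_n -> R) (gamma : R)
  (Vstar : 'rV[R]_n)
  (Phi : 'M[R]_(n, d1)) (g : 'rV[R]_d2 -> 'rV[R]_n) (h C l : R)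
  (PiVstar : 'rV[R]_n)
  (theta0 : 'rV[R]_(d1 + d2)) (theta : R -> 'rV[R]_(d1 + d2)) :
  (* the Markov reward process *)
  stochastic P -> irreducible P -> aperiodic P -> stationary_dist P mu ->
  0 <= gamma < 1 ->
  Vstar = exp_reward P r + gamma *: matvec P Vstar ->
  (* the residual-homogeneous parametrization *)
  \rank Phi = minn n d1 ->
  C1 g -> homogeneous h g ->
  0 < C -> 0 < l ->
  (forall th : 'rV[R]_(d1 + d2),
      munorm mu (resV Phi g th) <= C * (euclid_norm th) `^ l) ->
  (* PiVstar = Pi_Phi Vstar, the mu-orthogonal projection onto span(Phi) *)
  (exists w : 'rV[R]_d1, PiVstar = matvec Phi w) ->
  (forall u : 'rV[R]_d1, muinner mu (matvec Phi u) (Vstar - PiVstar) = 0) ->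
  (* the trajectory: theta(0) = theta0, right-continuous at 0, and for t > 0
     d/dt theta = - nabla V(theta)^T A (V(theta) - Vstar)
     (nabla V(theta)^T = 'J (resV Phi g) theta in the row-vector convention) *)
  theta 0 = theta0 ->
  (theta @ (0:R)^'+) --> theta 0 ->
  (forall t, 0 < t -> derivable theta t 1 /\
     'D_1 theta t =
       - ('J (resV Phi g) (theta t) *m Amat mu gamma P
            *m (resV Phi g (theta t) - Vstar)^T)^T) ->
  (limf_einf (fun t => (munorm mu (resV Phi g (theta t) - PiVstar))%:E)
     (@pinfty_nbhs R) <=
   ((munorm mu (matvec (1%:M - gamma *: P) (Vstar - PiVstar))) / (1 - gamma))%:E)%E.
Proof.
move=> sP _ _ sd /andP[g0 g1] _ _ _ hom _ _ _ [w Pw] _ _ _ dyn.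
have dg : forall x, differentiable g x := hom.1.
have [h' [h0 hf]] := homog_fact hom.
pose M := 1%:M - gamma *: P.
pose K := munorm mu (matvec M (Vstar - PiVstar)).
pose c : 'rV[R]_(d1 + d2) := row_mx (const_mx (1 / 2)) (const_mx (h' / 2)).
pose a : 'rV[R]_(d1 + d2) := row_mx w 0.
pose E t := \sum_k c 0 k * (theta t 0 k - a 0 k) ^+ 2.
pose dE t := \sum_k 2 * c 0 k * (theta t 0 k - a 0 k) * ('D_1 theta t) 0 k.
pose e t := resV Phi g (theta t) - PiVstar.
have c0 : forall k, 0 <= c 0 k.
  move=> k; rewrite /c -(splitK k); case: (fintype.split k) => j /=.
    by rewrite row_mxEl mxE.
  by rewrite row_mxEr mxE divr_ge0.
have key_eq : forall t, 0 < t ->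
    dE t = - muinner mu (e t) (matvec M (e t + (PiVstar - Vstar))).
  move=> t t0; have [dth Dth] := dyn t t0.
  pose z := row_mx (lsubmx (theta t) - w) (h' *: rsubmx (theta t)).
  have S1 : dE t = (z *m ('D_1 theta t)^T) 0 0.
    rewrite /dE mxE; apply: eq_bigr => k _; rewrite [(_^T) _ _]mxE.
    congr (_ * _); rewrite /z /c /a -(splitK k); case: (fintype.split k) => j.
      by rewrite !row_mxEl !mxE; field.
    by rewrite !row_mxEr !mxE; field.
  have Zeq : z *m 'J (resV Phi g) (theta t) = e t.
    rewrite resV_J // /z row_mxKl row_mxKr mulmxBl -scalemxAl -hf -!matvecE -Pw.
    by rewrite /e /resV addrAC.
  rewrite S1 Dth linearN /= trmxK mulmxN mxE; congr (- _).
  rewrite mulmxA mulmxA Zeq /Amat muinner_mx.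
  by rewrite /e addrA subrK.
apply: liminf_le => Mx cc Bc Hc.
apply: (@descent R E dE (fun t => munorm mu (e t)) K gamma _ _ _ _ g1 Mx cc Bc Hc).
- by move=> t; apply: sumr_ge0 => k _; rewrite mulr_ge0 // sqr_ge0.
- by move=> t t0; exact: (wsumsq_derive c a (dyn t t0).1).
- move=> t t0; rewrite key_eq //.
  have := key (e t) (PiVstar - Vstar) sP sd g0.
  have -> : matvec (1%:M - gamma *: P) (PiVstar - Vstar) =
            - matvec (1%:M - gamma *: P) (Vstar - PiVstar).
    by rewrite !matvecE -mulNmx opprB.
  rewrite munormN -/K -/M => H; lra.
- exact: munorm_ge0.
Qed.
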